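(* Let $P$ and $Q$ be tangent planes in $\mathbb{H}^4$, i.e. distinct planes that are disjoint in $\mathbb{H}^4$ and whose boundaries at infinity meet in exactly one point. Then $H_PH_Q$ is a parabolic isometry.
   Context: A plane is a $2$-dimensional totally geodesic subspace of $\mathbb{H}^4$. For a plane $P$, the half-turn $H_P$ is the composition of reflections in two orthogonal hyperplanes intersecting in $P$. *)

(* Defs.v *)
(* hyperboloid model of H^4 inside Minkowski space R^{1,4}. *)
From HB Require Import structures.
From mathcomp Require Import all_boot all_order all_algebra.
From mathcomp Require Import reals.
Set Implicit Arguments. Unset Strict Implicit. Unset Printing Implicit Defensive.
Import Order.TTheory GRing.Theory Num.Theory.
Local Open Scope ring_scope.

Section Hyperbolic.
Variable R : realType.

(* Points of R^{1,4} are row vectors of length 5; coordinate 0 is the time coordinate. *)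
Definition vec := 'rV[R]_5.

Definition lorJ : 'M[R]_5 :=
  \matrix_(i, j) (if i == j then (if i == ord0 then -1 else 1) else 0).

Definition mink (x y : vec) : R := (x *m lorJ *m y^T) ord0 ord0.

Definition H4 (x : vec) : Prop := mink x x = -1 /\ 0 < x ord0 ord0.

(* points of the boundary at infinity: future null vectors, up to positive scaling *)
Definition ideal (u : vec) : Prop := mink u u = 0 /\ 0 < u ord0 0.
Definition same_ideal (u v : vec) : Prop := exists2 c : R, 0 < c & v = c *: u.

(* A (totally geodesic) plane of H^4: H^4 intersected with a 3-dimensional
   linear subspace V (given as the row space of a matrix) meeting H^4. *)
Definition is_plane (V : 'M[R]_5) : Prop :=
  \rank V = 3%N /\ exists x, H4 x /\ (x <= V)%MS.

Definition on_plane (V : 'M[R]_5) (x : vec) : Prop := H4 x /\ (x <= V)%MS.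

Definition on_plane_boundary (V : 'M[R]_5) (u : vec) : Prop := ideal u /\ (u <= V)%MS.

(* Isometries act on row vectors on the right: x |-> x *m A. *)
Definition isometry (A : 'M[R]_5) : Prop :=
  (forall x y, mink (x *m A) (y *m A) = mink x y) /\
  (forall x, H4 x -> H4 (x *m A)).

(* Reflection in the hyperplane H^4 ∩ n^perp, n a unit spacelike normal:
   x |-> x - 2 <x,n> n *)
Definition refl (n : vec) : 'M[R]_5 := 1%:M - 2%:R *: (lorJ *m n^T *m n).

(* A is a half-turn about the plane V: the composition of the reflections in
   two orthogonal hyperplanes (normals n1, n2) whose intersection is V ∩ H^4. *)
Definition half_turn (V : 'M[R]_5) (A : 'M[R]_5) : Prop :=
  exists n1 n2 : vec,
    [/\ mink n1 n1 = 1, mink n2 n2 = 1, mink n1 n2 = 0,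
        (forall x, H4 x -> (on_plane V x <-> (mink x n1 = 0 /\ mink x n2 = 0)))
      & A = refl n2 *m refl n1].

Definition fixes_ideal (A : 'M[R]_5) (u : vec) : Prop := same_ideal u (u *m A).

Definition parabolic (A : 'M[R]_5) : Prop :=
  [/\ isometry A,
      (forall x, H4 x -> x *m A <> x),
      (exists u, ideal u /\ fixes_ideal A u)
    & (forall u v, ideal u -> ideal v -> fixes_ideal A u -> fixes_ideal A v ->
         same_ideal u v)].

End Hyperbolic.

(* Main.v *)
Require Import Defs.
From HB Require Import structures.
Set Warnings "-notation-overridden,-ambiguous-paths".
From mathcomp Require Import all_boot all_order all_algebra reals.
From mathcomp Require Import ring lra.
Import Order.TTheory GRing.Theory Num.Theory.
Local Open Scope ring_scope.

Section S.
Variable R : realType.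
Implicit Types x y z n : vec R.

Notation o0 := (@ord0 4).
Notation o1 := (lift o0 (@ord0 3)).
Notation o2 := (lift o0 (lift (@ord0 3) (@ord0 2))).
Notation o3 := (lift o0 (lift (@ord0 3) (lift (@ord0 2) (@ord0 1)))).
Notation o4 := (lift o0 (lift (@ord0 3) (lift (@ord0 2) (lift (@ord0 1) (@ord0 0))))).
Notation t x := (x ord0 o0).
Notation c i x := (x ord0 i).

Lemma minkE x y : mink x y = - (t x * t y) + c o1 x * c o1 y + c o2 x * c o2 y
   + c o3 x * c o3 y + c o4 x * c o4 y.
Proof.
rewrite /mink mxE !big_ord_recl big_ord0 !mxE.
rewrite !big_ord_recl !big_ord0 !mxE /=; ring.
Qed.

Lemma minkC x y : mink x y = mink y x.
Proof. rewrite !minkE; ring. Qed.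
Lemma minkDl x y z : mink (x + y) z = mink x z + mink y z.
Proof. rewrite !minkE !mxE; ring. Qed.
Lemma minkBl x y z : mink (x - y) z = mink x z - mink y z.
Proof. rewrite !minkE !mxE; ring. Qed.
Lemma minkZl a x y : mink (a *: x) y = a * mink x y.
Proof. rewrite !minkE !mxE; ring. Qed.
Lemma minkDr x y z : mink z (x + y) = mink z x + mink z y.
Proof. rewrite !minkE !mxE; ring. Qed.
Lemma minkBr x y z : mink z (x - y) = mink z x - mink z y.
Proof. rewrite !minkE !mxE; ring. Qed.
Lemma minkZr a x y : mink y (a *: x) = a * mink y x.
Proof. rewrite !minkE !mxE; ring. Qed.
Lemma mink0r x : mink x 0 = 0.
Proof. rewrite !minkE !mxE; ring. Qed.
Lemma minkNl x y : mink (- x) y = - mink x y.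
Proof. rewrite !minkE !mxE; ring. Qed.

Lemma minkNr x y : mink y (- x) = - mink y x.
Proof. rewrite !minkE !mxE; ring. Qed.
Definition mk := (minkDl, minkBl, minkZl, minkDr, minkBr, minkZr, minkNl, minkNr).

Definition act x n := x - (2 * mink x n) *: n.

Lemma mx11_mul (a : 'M[R]_1) (v : vec R) : a *m v = a ord0 ord0 *: v.
Proof.
apply/matrixP => i j; rewrite !mxE big_ord1 (ord1 i); by [].
Qed.

Lemma refl_act x n : x *m refl n = act x n.
Proof.
rewrite /refl /act mulmxBr mulmx1 scalemxAr !mulmxA mx11_mul scalerA.
by rewrite -/(mink x n) mulrC.
Qed.

Lemma act_mink x y n : mink n n = 1 -> mink (act x n) (act y n) = mink x y.
Proof.
move=> hn; rewrite /act !mk hn ?(minkC n x) ?(minkC n y) ?(minkC y x); ring.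
Qed.

Lemma causal x y : 0 < t x -> 0 < t y -> mink x x <= 0 -> mink y y <= 0 ->
  mink x y <= 0.
Proof.
rewrite !minkE => hx hy hxx hyy.
set a := t x in hx hxx *; set b := t y in hy hyy *.
set x1 := c o1 x in hxx *; set x2 := c o2 x in hxx *; set x3 := c o3 x in hxx *;
set x4 := c o4 x in hxx *.
set y1 := c o1 y in hyy *; set y2 := c o2 y in hyy *; set y3 := c o3 y in hyy *;
set y4 := c o4 y in hyy *.
have h1 := sqr_ge0 (b * x1 - a * y1).
have h2 := sqr_ge0 (b * x2 - a * y2).
have h3 := sqr_ge0 (b * x3 - a * y3).
have h4 := sqr_ge0 (b * x4 - a * y4).
have hab : 0 < a * b by rewrite mulr_gt0.
have hxx' : b^+2 * (x1^+2 + x2^+2 + x3^+2+x4^+2) <= b^+2 * a^+2.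
  by rewrite ler_wpM2l ?sqr_ge0 //; lra.
have hyy' : a^+2 * (y1^+2 + y2^+2 + y3^+2+y4^+2) <= a^+2 * b^+2.
  by rewrite ler_wpM2l ?sqr_ge0 //; lra.
suff : (a * b) * (x1 * y1 + x2 * y2 + x3 * y3 + x4 * y4) <= (a*b) * (a * b).
  rewrite ler_pM2l //; lra.
nra.
Qed.


Lemma timelike_t z : mink z z < 0 -> t z != 0.
Proof.
rewrite minkE => h; apply/eqP => h0; move: h; rewrite h0.
have := sqr_ge0 (c o1 z); have := sqr_ge0 (c o2 z); have := sqr_ge0 (c o3 z);
have := sqr_ge0 (c o4 z); rewrite !expr2; lra.
Qed.

Lemma act_H4 x n : mink n n = 1 -> H4 x -> H4 (act x n).
Proof.
move=> hn [hxx hx]; split; first by rewrite act_mink.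
set y := act x n.
have hyy : mink y y = -1 by rewrite act_mink.
have hxy : mink x y <= -1.
  rewrite /y /act !mk hxx; have := sqr_ge0 (mink x n); rewrite expr2; lra.
have : t y != 0 by apply: timelike_t; rewrite hyy; lra.
rewrite neq_lt => /orP [hy|//].
have hy' : 0 < t (- y) by rewrite mxE; lra.
have := @causal x (- y) hx hy'; rewrite minkNl minkNr opprK hxx hyy => /(_ (lerN10 _) (lerN10 _)).
rewrite minkNr; lra.
Qed.

Lemma isometry_refl n : mink n n = 1 -> Defs.isometry (refl n).
Proof.
move=> hn; split=> [x y|x hx]; rewrite !refl_act; first exact: act_mink.
exact: act_H4.
Qed.

Lemma isometry_mul (A B : 'M[R]_5) : Defs.isometry A -> Defs.isometry B -> Defs.isometry (A *m B).
Proof.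
move=> [hA1 hA2] [hB1 hB2]; split=> [x y|x hx]; rewrite !mulmxA.
  by rewrite hB1 hA1.
by apply: hB2; apply: hA2.
Qed.

Lemma normalize z : mink z z < 0 -> exists k, H4 (k *: z).
Proof.
move=> hz.
set s := Num.sqrt (- mink z z).
have hs : 0 < s by rewrite sqrtr_gt0; lra.
have hs2 : s ^+ 2 = - mink z z by rewrite sqr_sqrtr //; lra.
have hk : forall k, k ^+ 2 = s^-1 ^+ 2 -> mink (k *: z) (k *: z) = -1.
  move=> k hk; rewrite minkZl minkZr mulrA -expr2 hk exprVn hs2.
  have : mink z z != 0 by rewrite lt_eqF.
  by move=> hne; field.
have := @timelike_t z hz; rewrite neq_lt => /orP [hn|hp].
  exists (- s^-1); split; first by apply: hk; rewrite sqrrN.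
  rewrite mxE mulNr -mulrN; apply: mulr_gt0; rewrite ?invr_gt0 //; lra.
exists (s^-1); split; first by apply: hk.
rewrite mxE; apply: mulr_gt0; rewrite ?invr_gt0 //.
Qed.


Lemma ord5 (j : 'I_5) : j = o0 \/ j = o1 \/ j = o2 \/ j = o3 \/ j = o4.
Proof.
case: j => -[|[|[|[|[|k]]]]] hk.
- by left; apply/val_inj.
- by right; left; apply/val_inj.
- by right; right; left; apply/val_inj.
- by right; right; right; left; apply/val_inj.
- by right; right; right; right; apply/val_inj.
- by [].
Qed.

Lemma sq4_0 (a b c d : R) : a^+2 + b^+2 + c^+2 + d^+2 = 0 -> [/\ a = 0, b = 0, c = 0 & d = 0].
Proof.
move=> h.
have ha := sqr_ge0 a; have hb := sqr_ge0 b; have hc := sqr_ge0 c; have hd := sqr_ge0 d.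
have e : forall w : R, w ^+ 2 = 0 -> w = 0 by move=> w /eqP; rewrite sqrf_eq0 => /eqP.
split; apply: e; lra.
Qed.

Lemma null_perp u p : ideal u -> ideal p -> mink u p = 0 ->
  exists2 k : R, 0 < k & u = k *: p.
Proof.
move=> [huu hu] [hpp hp] hup.
move: huu hpp hup; rewrite !minkE => huu hpp hup.
have := @sq4_0 (t p * c o1 u - t u * c o1 p) (t p * c o2 u - t u * c o2 p)
   (t p * c o3 u - t u * c o3 p) (t p * c o4 u - t u * c o4 p).
case.
  move: huu hpp hup.
  set a := t u; set b := t p.
  set u1 := c o1 u; set u2 := c o2 u; set u3 := c o3 u; set u4 := c o4 u.
  set p1 := c o1 p; set p2 := c o2 p; set p3 := c o3 p; set p4 := c o4 p.
  move=> huu hpp hup.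
  have -> : (b * u1 - a * p1) ^+ 2 + (b * u2 - a * p2) ^+ 2 + (b * u3 - a * p3) ^+ 2 +
    (b * u4 - a * p4) ^+ 2 = b^+2 * (- (a * a) + u1 * u1 + u2 * u2 + u3 * u3 + u4 * u4)
    + a^+2 * (- (b * b) + p1 * p1 + p2 * p2 + p3 * p3 + p4 * p4)
    - 2 * a * b * (- (a * b) + u1 * p1 + u2 * p2 + u3 * p3 + u4 * p4) by ring.
  by rewrite huu hpp hup; ring.
move=> e1 e2 e3 e4.
have hp0 : t p != 0 by rewrite gt_eqF.
exists (t u / t p); first by rewrite divr_gt0.
apply/matrixP => i j.
have -> : i = ord0 by apply: ord_inj; case: i => -[].
rewrite mxE.
case: (ord5 j) => [->|[->|[->|[->|->]]]]; (apply: (mulfI hp0); rewrite mulrCA -mulrA mulKf //);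
  [exact: mulrC | apply/eqP; rewrite -subr_eq0; exact/eqP ..].
Qed.


Definition ht n1 n2 x := x - (2 * mink x n1) *: n1 - (2 * mink x n2) *: n2.

Lemma ht_mul x n1 n2 : mink n1 n2 = 0 -> x *m (refl n2 *m refl n1) = ht n1 n2 x.
Proof.
move=> h12; rewrite mulmxA !refl_act /act /ht !mk (minkC n2 n1) h12.
apply/matrixP => i j; rewrite !mxE; ring.
Qed.

Lemma ht_inv x n1 n2 : mink n1 n1 = 1 -> mink n2 n2 = 1 -> mink n1 n2 = 0 ->
  ht n1 n2 (ht n1 n2 x) = x.
Proof.
move=> h1 h2 h12; rewrite /ht !mk (minkC n2 n1) h12 h1 h2.
apply/matrixP => i j; rewrite !mxE; ring.
Qed.

Lemma ht_perp x n1 n2 : mink x n1 = 0 -> mink x n2 = 0 -> ht n1 n2 x = x.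
Proof. by move=> h1 h2; rewrite /ht h1 h2 mulr0 !scale0r !subr0. Qed.

Lemma fixed_decomp x n1 n2 m1 m2 :
  mink n1 n1 = 1 -> mink n2 n2 = 1 -> mink n1 n2 = 0 ->
  mink m1 m1 = 1 -> mink m2 m2 = 1 -> mink m1 m2 = 0 ->
  ht n1 n2 (ht m1 m2 x) = x ->
  let y := x - (mink x n1 *: n1 + mink x n2 *: n2) in
  [/\ mink y n1 = 0, mink y n2 = 0, mink y m1 = 0, mink y m2 = 0 &
      mink y y = mink x x - (mink x n1)^+2 - (mink x n2)^+2].
Proof.
move=> h1 h2 h12 g1 g2 g12 hfix y.
have E : ht m1 m2 x = ht n1 n2 x by rewrite -{2}hfix ht_inv.
have E1 := congr1 (fun w => mink w m1) E.
have E2 := congr1 (fun w => mink w m2) E.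
move: E1 E2; rewrite /= /ht !mk g1 g2 (minkC m2 m1) g12 => E1 E2.
rewrite /y; split; rewrite ?mk ?h1 ?h2 ?(minkC n2 n1) ?h12 ?g1 ?g2 ?(minkC m2 m1) ?g12;
  rewrite ?(minkC n1 x) ?(minkC n2 x); try ring.
- lra.
- lra.
Qed.


Lemma plane_perp (V : 'M[R]_5) n1 n2 x0 p :
  (forall x, H4 x -> (on_plane V x <-> (mink x n1 = 0 /\ mink x n2 = 0))) ->
  H4 x0 -> (x0 <= V)%MS -> ideal p -> (p <= V)%MS -> mink p n1 = 0 /\ mink p n2 = 0.
Proof.
move=> hiff hx0 hx0V [hpp hp] hpV.
have [e1 e2] : mink x0 n1 = 0 /\ mink x0 n2 = 0 by apply/hiff.
set y := x0 + p.
have hxp : mink x0 p <= 0.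
  apply: causal; [exact: hx0.2 | exact: hp | rewrite hx0.1; lra | by rewrite hpp].
have hyy : mink y y < 0.
  rewrite /y !mk hpp hx0.1 (minkC p x0); lra.
have [k hk] := @normalize y hyy.
have hkV : (k *: y <= V)%MS by rewrite scalemx_sub // addmx_sub.
have [f1 f2] : mink (k *: y) n1 = 0 /\ mink (k *: y) n2 = 0 by apply/hiff.
have k0 : k != 0.
  apply/eqP => k0; move: hk => [_]; rewrite k0 scale0r mxE; by rewrite ltxx.
move: f1 f2; rewrite !minkZl => /eqP; rewrite mulf_eq0 (negbTE k0) /= => /eqP f1
  /eqP; rewrite mulf_eq0 (negbTE k0) /= => /eqP f2.
move: f1 f2; rewrite /y !minkDl e1 e2 !add0r; by split.
Qed.

End S.
Arguments plane_perp {R V n1 n2 x0 p}.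
Arguments fixed_decomp {R x n1 n2 m1 m2}.
Arguments ht {R}.
Arguments ht_mul {R}.
Arguments ht_perp {R}.
Arguments isometry_mul {R}.
Arguments isometry_refl {R}.

Theorem lemma6p4 (R : realType) (P Q hP hQ : 'M[R]_5) :
  is_plane P -> is_plane Q ->
  ~ (P == Q)%MS ->
  (forall x, ~ (on_plane P x /\ on_plane Q x)) ->
  (exists u, on_plane_boundary P u /\ on_plane_boundary Q u) ->
  (forall u v, on_plane_boundary P u -> on_plane_boundary Q u ->
               on_plane_boundary P v -> on_plane_boundary Q v -> same_ideal u v) ->
  half_turn P hP -> half_turn Q hQ ->
  parabolic (hQ *m hP).
Proof.
move=> [_ [x0 [hx0 hx0P]]] [_ [y0 [hy0 hy0Q]]] _ hdisj [p [[hp hpP] [_ hpQ]]] _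
  [n1 [n2 [h1 h2 h12 hiffP ->]]] [m1 [m2 [g1 g2 g12 hiffQ ->]]].
have [pn1 pn2] := plane_perp hiffP hx0 hx0P hp hpP.
have [pm1 pm2] := plane_perp hiffQ hy0 hy0Q hp hpQ.
have noz : forall z : vec R, mink z z < 0 -> mink z n1 = 0 -> mink z n2 = 0 ->
    mink z m1 = 0 -> mink z m2 = 0 -> False.
  move=> z hz z1 z2 z3 z4.
  have [k hk] := @normalize R z hz.
  apply: (hdisj (k *: z)); split; [apply/hiffP|apply/hiffQ];
    by rewrite // !minkZl ?z1 ?z2 ?z3 ?z4 mulr0.
have hA : forall x : vec R, x *m (refl m2 *m refl m1 *m (refl n2 *m refl n1))
   = ht n1 n2 (ht m1 m2 x).
  by move=> x; rewrite mulmxA ht_mul // ht_mul.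
have hisoA : Defs.isometry (refl m2 *m refl m1 *m (refl n2 *m refl n1)).
  by apply: isometry_mul; apply: isometry_mul; apply: isometry_refl.
have hpA : p *m (refl m2 *m refl m1 *m (refl n2 *m refl n1)) = p.
  by rewrite hA !ht_perp.
have claim : forall u : vec R, ideal u ->
    fixes_ideal (refl m2 *m refl m1 *m (refl n2 *m refl n1)) u ->
    exists2 k : R, 0 < k & u = k *: p.
  move=> u hu [k hk0 hk].
  have := hisoA.1 u p; rewrite hk hpA minkZl => hkup.
  have [hup0|hup0] := eqVneq (mink u p) 0; first exact: (@null_perp R u p).
  exfalso.
  have k1 : k = 1.
    by apply: (mulIf hup0); rewrite mul1r.
  move: hk; rewrite k1 scale1r hA => hfix.
  have [e1 e2 e3 e4 e5] := fixed_decomp h1 h2 h12 g1 g2 g12 hfix.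
  set y := u - _ in e1 e2 e3 e4 e5.
  have hup : mink u p <= 0.
    by apply: causal; [exact: hu.2 | exact: hp.2 | rewrite hu.1 | rewrite hp.1].
  have hyp : mink y p = mink u p.
    by rewrite /y !mk (minkC R n1) (minkC R n2) pn1 pn2 !mulr0 addr0 subr0.
  clearbody y.
  apply: (noz (y + p)); rewrite ?minkDl ?e1 ?e2 ?e3 ?e4 ?pn1 ?pn2 ?pm1 ?pm2 ?addr0 //.
  rewrite !minkDr e5 hyp (minkC R p y) hyp hp.1 hu.1.
  have := sqr_ge0 (mink u n1); have := sqr_ge0 (mink u n2).
  have : mink u p < 0 by rewrite lt_neqAle hup0 hup.
  lra.
split.
- exact: hisoA.
- move=> x hx; rewrite hA => hfix.
  have [e1 e2 e3 e4 e5] := fixed_decomp h1 h2 h12 g1 g2 g12 hfix.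
  apply: (noz _ _ e1 e2 e3 e4); rewrite e5 hx.1.
  have := sqr_ge0 (mink x n1); have := sqr_ge0 (mink x n2); lra.
- exists p; split=> //; exists 1 => //; by rewrite scale1r hpA.
- move=> u v hu hv fu fv.
  have [a ha ->] := claim u hu fu.
  have [b hb ->] := claim v hv fv.
  exists (b / a); first by rewrite divr_gt0.
  by rewrite scalerA divfK // gt_eqF.
Qed.
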